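(* Let $p\geq 3$ be a prime, $u\in\{2,\ldots,p-1\}$ and $s$ a positive integer. Then $$\nu_{p}\big(A_{p,(p-1)(up^s-1)}(n)\big)=1$$ for infinitely many $n\in\mathbb{N}$.
   Context: For an integer $m\geq 2$ and a positive integer $k$, the integers $A_{m,k}(n)$, $n\in\mathbb{N}=\{0,1,2,\ldots\}$, are defined by the formal power series identity $\prod_{i=0}^{\infty}\big(1-x^{m^{i}}\big)^{-k}=\sum_{n=0}^{\infty}A_{m,k}(n)x^{n}$. For a prime $p$, $\nu_p(n)$ denotes the $p$-adic valuation of the integer $n$, with $\nu_p(0)=+\infty$. *)

(* Defs.v *)
From mathcomp Require Import all_boot all_order all_algebra.
Set Implicit Arguments. Unset Strict Implicit. Unset Printing Implicit Defensive.
Import GRing.Theory.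
Local Open Scope ring_scope.

(* A_{m,k}(n) = [x^n] prod_{i>=0} (1 - x^{m^i})^{-k}.
   Modulo x^{n+1}, (1 - y)^{-1} agrees with sum_{j<=n} y^j (for y = x^{m^i},
   m^i >= 1), and factors with i > n (so m^i > n, as m >= 2) are 1.
   Hence the coefficient of x^n of the infinite product equals the
   coefficient of x^n of the following finite polynomial product. *)
Definition geom_trunc (m i n : nat) : {poly int} :=
  \sum_(j < n.+1) 'X^(j * m ^ i).

Definition A (m k n : nat) : int :=
  (\prod_(i < n.+1) (geom_trunc m i n) ^+ k)`_n.

(* p-adic valuation of an integer (only used at nonzero values here:
   nu p a = 1 forces a <> 0, since logn p 0 = 0). *)
Definition nu (p : nat) (a : int) : nat := logn p `|a|%N.

(* Main.v *)
Require Import Defs.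
From mathcomp Require Import all_boot all_order all_algebra.
From mathcomp Require Import ring zify.
Set Implicit Arguments. Unset Strict Implicit. Unset Printing Implicit Defensive.
Import GRing.Theory.
Local Open Scope ring_scope.

Lemma dvdzD (d a b : int) : (d %| a)%Z -> (d %| b)%Z -> (d %| a + b)%Z.
Proof. move=> ha hb; exact: rpredD. Qed.
Lemma dvdzN (d a : int) : (d %| a)%Z -> (d %| - a)%Z.
Proof. by move=> ha; rewrite -mulN1r; apply: dvdz_mull. Qed.
Lemma dvdzB (d a b : int) : (d %| a)%Z -> (d %| b)%Z -> (d %| a - b)%Z.
Proof. move=> ha hb; exact: rpredB. Qed.
Lemma dvdz_sum (d : int) (I : Type) (r : seq I) (P : pred I) (F : I -> int) :
  (forall i, P i -> (d %| F i)%Z) -> (d %| \sum_(i <- r | P i) F i)%Z.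
Proof. move=> h; apply: rpred_sum => i /h; done. Qed.

Definition pdiv (M : int) (T : nat) (f : {poly int}) :=
  forall i, (i < T)%N -> (M %| f`_i)%Z.
Definition cong M T (f g : {poly int}) := pdiv M T (f - g).

Lemma pdiv0 M T : pdiv M T 0.
Proof. by move=> i _; rewrite coef0 dvdz0. Qed.
Lemma pdivD M T f g : pdiv M T f -> pdiv M T g -> pdiv M T (f + g).
Proof. by move=> hf hg i hi; rewrite coefD; apply: dvdzD; [apply: hf|apply: hg]. Qed.
Lemma pdivN M T f : pdiv M T f -> pdiv M T (- f).
Proof. by move=> hf i hi; rewrite coefN; apply: dvdzN; apply: hf. Qed.
Lemma pdivB M T f g : pdiv M T f -> pdiv M T g -> pdiv M T (f - g).
Proof. by move=> hf hg; apply: pdivD => //; apply: pdivN. Qed.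
Lemma pdiv_sum M T (I : Type) (r : seq I) (P : pred I) (F : I -> {poly int}) :
  (forall i, P i -> pdiv M T (F i)) -> pdiv M T (\sum_(i <- r | P i) F i).
Proof.
move=> h; elim/big_ind: _ => //; [exact: pdiv0| exact: pdivD].
Qed.
Lemma pdivMr M T f g : pdiv M T f -> pdiv M T (f * g).
Proof.
move=> hf i hi; rewrite coefM; apply: dvdz_sum => j _; apply: dvdz_mulr.
apply: hf; exact: leq_ltn_trans (leq_ord j) hi.
Qed.
Lemma pdivMl M T f g : pdiv M T g -> pdiv M T (f * g).
Proof. by move=> hg; rewrite mulrC; apply: pdivMr. Qed.
Lemma pdivMM M1 M2 T f g : pdiv M1 T f -> pdiv M2 T g -> pdiv (M1 * M2) T (f * g).
Proof.
move=> hf hg i hi; rewrite coefM; apply: dvdz_sum => j _; apply: dvdz_mul.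
  apply: hf; exact: leq_ltn_trans (leq_ord j) hi.
apply: hg; exact: leq_ltn_trans (leq_subr _ _) hi.
Qed.
Lemma pdiv_leT M T T' f : (T' <= T)%N -> pdiv M T f -> pdiv M T' f.
Proof. by move=> hT hf i hi; apply: hf; exact: leq_trans hi hT. Qed.
Lemma pdiv_dvd M M' T f : (M' %| M)%Z -> pdiv M T f -> pdiv M' T f.
Proof. by move=> hM hf i hi; apply: dvdz_trans hM (hf i hi). Qed.
Lemma pdiv_XnM M T q h : (T <= q)%N -> pdiv M T ('X^q * h).
Proof.
move=> hq i hi; rewrite coefXnM.
by rewrite (leq_trans hi hq) dvdz0.
Qed.
Lemma pdiv_comp M T q f : (0 < q)%N -> pdiv M T f -> pdiv M T (f \Po 'X^q).
Proof.
move=> hq hf i hi; rewrite coef_comp_poly_Xn //.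
case: ifP => _; last by rewrite dvdz0.
apply: hf; exact: leq_ltn_trans (leq_div _ _) hi.
Qed.
Lemma pdiv_eq T f i : pdiv 0 T f -> (i < T)%N -> f`_i = 0.
Proof. by move=> hf hi; move: (hf i hi); rewrite dvd0z => /eqP. Qed.

Lemma cong_refl M T f : cong M T f f.
Proof. rewrite /cong subrr; exact: pdiv0. Qed.
Lemma cong_sym M T f g : cong M T f g -> cong M T g f.
Proof. by move=> h; rewrite /cong -opprB; apply: pdivN. Qed.
Lemma cong_trans M T f g h : cong M T f g -> cong M T g h -> cong M T f h.
Proof.
move=> h1 h2; rewrite /cong; have -> : f - h = (f - g) + (g - h) by rewrite addrA subrK.
exact: pdivD.
Qed.
Lemma congD M T f g f' g' : cong M T f g -> cong M T f' g' -> cong M T (f + f') (g + g').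
Proof.
move=> h1 h2; rewrite /cong; have -> : f + f' - (g + g') = (f - g) + (f' - g') by rewrite opprD addrACA.
exact: pdivD.
Qed.
Lemma congB M T f g f' g' : cong M T f g -> cong M T f' g' -> cong M T (f - f') (g - g').
Proof.
move=> h1 h2; apply: congD => //; rewrite /cong opprK addrC -opprB.
exact: pdivN.
Qed.
Lemma congM M T f g f' g' : cong M T f g -> cong M T f' g' -> cong M T (f * f') (g * g').
Proof.
move=> h1 h2; rewrite /cong; have -> : f * f' - g * g' = (f - g) * f' + g * (f' - g').
  by rewrite mulrBl mulrBr addrA subrK.
apply: pdivD; [exact: pdivMr|exact: pdivMl].
Qed.
Lemma congX M T f g n : cong M T f g -> cong M T (f ^+ n) (g ^+ n).
Proof.
move=> h; elim: n => [|n IH]; first exact: cong_refl.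
by rewrite !exprS; apply: congM.
Qed.
Lemma cong_prod M T (I : Type) (r : seq I) (P : pred I) (F G : I -> {poly int}) :
  (forall i, P i -> cong M T (F i) (G i)) ->
  cong M T (\prod_(i <- r | P i) F i) (\prod_(i <- r | P i) G i).
Proof.
move=> h; elim/big_ind2: _ => //; first exact: cong_refl.
by move=> *; apply: congM.
Qed.
Lemma cong_comp M T q f g : (0 < q)%N -> cong M T f g -> cong M T (f \Po 'X^q) (g \Po 'X^q).
Proof.
move=> hq h; rewrite /cong -[_ - _]/((fun x => x) _).
have -> : (f \Po 'X^q) - (g \Po 'X^q) = (f - g) \Po 'X^q by rewrite linearB.
exact: pdiv_comp.
Qed.
Lemma cong_leT M T T' f g : (T' <= T)%N -> cong M T f g -> cong M T' f g.
Proof. exact: pdiv_leT. Qed.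
Lemma cong_dvd M M' T f g : (M' %| M)%Z -> cong M T f g -> cong M' T f g.
Proof. exact: pdiv_dvd. Qed.
Lemma cong_eq T f g i : cong 0 T f g -> (i < T)%N -> f`_i = g`_i.
Proof. by move=> h hi; apply/eqP; rewrite -subr_eq0 -coefB (pdiv_eq h hi). Qed.
Lemma cong0 M T f g : cong 0 T f g -> cong M T f g.
Proof. by apply: cong_dvd; rewrite dvdz0. Qed.
Lemma cong_XnM M T q f h : (T <= q)%N -> cong M T (f + 'X^q * h) f.
Proof. by move=> hq; rewrite /cong addrAC subrr add0r; apply: pdiv_XnM. Qed.

Lemma cong_sum M T (I : Type) (r : seq I) (P : pred I) (F G : I -> {poly int}) :
  (forall i, P i -> cong M T (F i) (G i)) ->
  cong M T (\sum_(i <- r | P i) F i) (\sum_(i <- r | P i) G i).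
Proof.
move=> h; elim/big_ind2: _ => //; first exact: cong_refl.
by move=> *; apply: congD.
Qed.

Lemma dvdz_natn (p n : nat) : (p %| n)%N -> (p%:Z %| (n%:R : int))%Z.
Proof. by move=> h; rewrite dvdzE /= natz. Qed.

Lemma coef_1subX n i : ((1 - 'X) ^+ n : {poly int})`_i = (-1) ^+ i * ('C(n, i))%:R.
Proof.
elim: n i => [|n IH] i.
  by rewrite expr0 coef1; case: i => [|i]; rewrite ?bin0 ?bin0n ?expr0 ?mulr1 ?mulr0.
rewrite exprS mulrBl mul1r coefB coefXM IH.
case: i => [|i]; first by rewrite !bin0 subr0.
rewrite /= IH binS natrD exprS mulrDr; rewrite mulN1r -mulNr; ring.
Qed.

Lemma frob1 p T : prime p -> odd p ->
  cong p%:Z T ((1 - 'X) ^+ p) (1 - 'X^p).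
Proof.
move=> pp op i _; rewrite coefB coef_1subX coefB coef1 coefXn.
have p0 : (0 < p)%N by exact: prime_gt0.
case: (ltngtP i p) => hip.
- case: i hip => [|i] hip; first by rewrite bin0 /= subr0 mulr1 subrr dvdz0.
  rewrite /= ?subr0; apply: dvdz_mull; apply: dvdz_natn.
  by apply: prime_dvd_bin => //; rewrite ltn0Sn ltnW.
- have h0 : (i == 0)%N = false by apply/negbTE; rewrite -lt0n (ltn_trans p0 hip).
  rewrite bin_small // mulr0 h0 /= ?subrr ?subr0 ?dvdz0 //.
- subst i; rewrite binn (gtn_eqF p0) /= ?sub0r ?mulr1.
  by rewrite -signr_odd op expr1 subrr dvdz0.
Qed.

Lemma lift_p (p : nat) T (a b : {poly int}) : cong p%:Z T a b ->
  cong (p%:Z * p%:Z) T (a ^+ p) (b ^+ p).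
Proof.
move=> hab; rewrite /cong subrXX; apply: pdivMM => //.
have h1 : cong p%:Z T (\sum_(i < p) a ^+ (p.-1 - i) * b ^+ i)
                       (\sum_(i < p) b ^+ (p.-1 - i) * b ^+ i).
  by apply: cong_sum => i _; apply: congM; [apply: congX|apply: cong_refl].
have h2 : pdiv p%:Z T (\sum_(i < p) b ^+ (p.-1 - i) * b ^+ i).
  have -> : \sum_(i < p) b ^+ (p.-1 - i) * b ^+ i = b ^+ p.-1 *+ p.
    rewrite (eq_bigr (fun _ => b ^+ p.-1)) ?sumr_const ?card_ord // => i _.
    have hi := ltn_ord i; rewrite -exprD subnK // -ltnS (ltn_predK hi) //.
  move=> i _; rewrite coefMn -mulr_natr; apply: dvdz_mull.
  by rewrite dvdzE /= natz.
have := pdivD h1 h2; by rewrite subrK.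
Qed.

Lemma pdiv_sumX M T (I : eqType) (r : seq I) (e : I -> nat) :
  (forall i, i \in r -> (T <= e i)%N) -> pdiv M T (\sum_(i <- r) 'X^(e i)).
Proof.
move=> h; rewrite big_seq; apply: pdiv_sum => i /h hi.
by rewrite -(subnKC hi) exprD; apply: pdiv_XnM.
Qed.

Lemma cong_prod_seq M T (I : eqType) (r : seq I) (F G : I -> {poly int}) :
  (forall i, i \in r -> cong M T (F i) (G i)) ->
  cong M T (\prod_(i <- r) F i) (\prod_(i <- r) G i).
Proof. by move=> h; rewrite !(big_seq); apply: cong_prod. Qed.

Lemma cong_prod1 M T (I : eqType) (r : seq I) (F : I -> {poly int}) :
  (forall i, i \in r -> cong M T (F i) 1) -> cong M T (\prod_(i <- r) F i) 1.
Proof.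
elim: r => [|a r IH] h; first by rewrite big_nil; exact: cong_refl.
rewrite big_cons -[X in cong _ _ _ X]mulr1; apply: congM.
  by apply: h; rewrite mem_head.
by apply: IH => i hi; apply: h; rewrite in_cons hi orbT.
Qed.

Lemma gt_trunc p i n T : (0 < p)%N -> (n <= T)%N ->
  cong 0 n.+1 (geom_trunc p i T) (geom_trunc p i n).
Proof.
move=> p0 hT; rewrite /geom_trunc -!(big_mkord xpredT (fun j => ('X^(j * p ^ i) : {poly int}))).
rewrite (@big_cat_nat _ _ _ n.+1 0 T.+1) //= /cong addrAC subrr add0r.
apply: pdiv_sumX => j; rewrite mem_index_iota => /andP[hj _].
have pi0 : (0 < p ^ i)%N by rewrite expn_gt0 p0.
by apply: leq_trans hj _; rewrite leq_pmulr.
Qed.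

Lemma gt_one p i n T : (1 < p)%N -> (n < i)%N ->
  cong 0 n.+1 (geom_trunc p i T) 1.
Proof.
move=> p1 hi; rewrite /geom_trunc big_ord_recl mul0n expr0.
rewrite /cong addrC addKr; apply: pdiv_sumX => j _.
apply: leq_trans (ltn_trans hi (ltn_expl i p1)) _.
by rewrite leq_pmull.
Qed.

Lemma phi_A p k n T : (1 < p)%N -> (n < T)%N ->
  (\prod_(i < T) (geom_trunc p i T) ^+ k)`_n = A p k n.
Proof.
move=> p1 hT; rewrite /A; apply: (@cong_eq n.+1) => //.
rewrite -(big_mkord xpredT (fun i => geom_trunc p i T ^+ k)).
rewrite -(big_mkord xpredT (fun i => geom_trunc p i n ^+ k)).
rewrite (@big_cat_nat _ _ _ n.+1 0 T) //=.
rewrite -[X in cong _ _ _ X]mulr1; apply: congM.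
  apply: cong_prod_seq => i _; apply: congX; apply: gt_trunc => //.
    exact: ltnW. exact: ltnW.
apply: cong_prod1 => i; rewrite mem_index_iota => /andP[hi _].
by rewrite -(expr1n _ k); apply: congX; apply: gt_one.
Qed.

Lemma geom_tel n : (\sum_(j < n) ('X^j : {poly int})) * (1 - 'X) = 1 - 'X^n.
Proof.
elim: n => [|n IH]; first by rewrite big_ord0 mul0r expr0 subrr.
by rewrite big_ord_recr /= mulrDl IH mulrBr mulr1 -exprSr addrA subrK.
Qed.

Lemma gt_comp p i T : geom_trunc p i T \Po 'X^p = geom_trunc p i.+1 T.
Proof.
rewrite /geom_trunc rmorph_sum /=; apply: eq_bigr => j _.
by rewrite comp_Xn_poly -exprM expnS mulnCA.
Qed.

Lemma cong_1X M T q : (T <= q)%N -> cong M T (1 - 'X^q) 1.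
Proof. move=> h; have -> : (1 - 'X^q : {poly int}) = 1 + 'X^q * (-1) by rewrite mulrN1. exact: cong_XnM. Qed.

Lemma phi_fe p k T : (1 < p)%N ->
  cong 0 T ((\prod_(i < T) (geom_trunc p i T) ^+ k) * (1 - 'X) ^+ k)
           ((\prod_(i < T) (geom_trunc p i T) ^+ k) \Po 'X^p).
Proof.
move=> p1; case: T => [|T]; first by move=> i.
rewrite rmorph_prod /=.
rewrite big_ord_recl (big_ord_recr T) /=.
rewrite mulrAC -exprMn [X in cong _ _ X _]mulrC; apply: congM.
  apply: cong_prod => i _; rewrite rmorphXn /= gt_comp /bump /=.
  exact: cong_refl.
apply: (@cong_trans _ _ _ 1).
  rewrite -[X in cong _ _ _ X](expr1n _ k); apply: congX.
  rewrite /geom_trunc (eq_bigr (fun j : 'I_T.+2 => 'X^j)); last first.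
    by move=> j _; rewrite expn0 muln1.
  by rewrite geom_tel; apply: cong_1X.
apply: cong_sym; rewrite rmorphXn /= gt_comp -[X in cong _ _ _ X](expr1n _ k); apply: congX.
exact: gt_one.
Qed.

Lemma uniq_fe (p : nat) M T (c f g : {poly int}) : (1 < p)%N -> c`_0 = 1 ->
  cong M T (f * c) (f \Po 'X^p) -> cong M T (g * c) (g \Po 'X^p) ->
  (M %| f`_0 - g`_0)%Z -> cong M T f g.
Proof.
move=> p1 c0 hf hg h0.
have H : pdiv M T ((f - g) * c - ((f - g) \Po 'X^p)).
  have -> : (f - g) * c - ((f - g) \Po 'X^p) = (f * c - (f \Po 'X^p)) - (g * c - (g \Po 'X^p)).
    rewrite mulrBl linearB /=.
    ring.
  exact: pdivB.
set h := f - g in H *.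
suff: forall n N, (N <= n)%N -> (N < T)%N -> (M %| h`_N)%Z.
  by move=> hs N hN; apply: (hs N).
elim=> [|n IH] N hNn hNT.
  by move: hNn; rewrite leqn0 => /eqP ->; rewrite /h coefB.
case: (posnP N) => [->|Npos]; first by rewrite /h coefB.
have := H N hNT; rewrite coefB coefM big_ord_recr /= subnn c0 mulr1.
rewrite coef_comp_poly_Xn ?(ltnW p1) //.
have hS : (M %| \sum_(i < N) h`_i * c`_(N - i))%Z.
  apply: dvdz_sum => i _; apply: dvdz_mulr; apply: IH.
    by rewrite -ltnS (leq_trans (ltn_ord i)).
  exact: ltn_trans (ltn_ord i) hNT.
have hC : (M %| (if (p %| N)%N then h`_(N %/ p) else 0))%Z.
  case: ifP => _; last exact: dvdz0.
  apply: IH; first by rewrite -ltnS (leq_trans (ltn_Pdiv p1 Npos)).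
  exact: leq_ltn_trans (leq_div N p) hNT.
move=> hE.
have := dvdzD (dvdzB hE hS) hC.
set S := \sum_(i < N) _; set C := (if _ then _ else _).
by have -> : S + h`_N - C - S + C = h`_N by ring.
Qed.

Definition Pp (p L : nat) : {poly int} := \prod_(i < L) (1 - 'X^(p ^ i)) ^+ (p - 1).

Lemma comp1X (q : nat) : ((1 - 'X : {poly int}) \Po 'X^q) = 1 - 'X^q.
Proof. by rewrite rmorphB /= comp_polyX rmorph1. Qed.

Lemma comp1Xn (q r : nat) : ((1 - 'X^r : {poly int}) \Po 'X^q) = 1 - 'X^(q * r).
Proof. by rewrite rmorphB /= comp_Xn_poly rmorph1 -exprM. Qed.

Lemma pp_rec p L : Pp p L.+1 = (1 - 'X) ^+ (p - 1) * (Pp p L \Po 'X^p).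
Proof.
rewrite /Pp big_ord_recl expn0 expr1 rmorph_prod /=; congr (_ * _).
by apply: eq_bigr => i _; rewrite rmorphXn /= comp1Xn -expnS.
Qed.

Lemma pp_recr p L : Pp p L.+1 = Pp p L * (1 - 'X^(p ^ L)) ^+ (p - 1).
Proof. by rewrite /Pp big_ord_recr. Qed.

Lemma LA p u s T : prime p -> odd p -> (0 < s)%N ->
  cong (p%:Z * p%:Z) T ((1 - 'X) ^+ (p * (u * p ^ s))) ((1 - 'X^p) ^+ (u * p ^ s)).
Proof.
move=> pp op; case: s => [|s] // _.
have -> : (u * p ^ s.+1 = p * (u * p ^ s))%N by rewrite expnS mulnCA.
move: (u * p ^ s)%N => w.
rewrite mulnA exprM (exprM _ p w) exprM; apply: congX.
by apply: lift_p; apply: frob1.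
Qed.

Lemma G_fe p u s L T : prime p -> odd p -> (0 < s)%N -> (0 < u)%N ->
  (T <= p ^ L.+1)%N ->
  cong (p%:Z * p%:Z) T
    (((1 - 'X) ^+ (u * p ^ s) * Pp p L.+1) * (1 - 'X) ^+ ((p - 1) * (u * p ^ s - 1)))
    (((1 - 'X) ^+ (u * p ^ s) * Pp p L.+1) \Po 'X^p).
Proof.
move=> pp op s0 u0 hT.
set w := (u * p ^ s)%N.
have w0 : (0 < w)%N by rewrite /w muln_gt0 u0 expn_gt0 prime_gt0.
have p0 : (0 < p)%N by exact: prime_gt0.
have E : (p * w = w + (p - 1) + (p - 1) * (w - 1))%N by nia.
set Q := Pp p L \Po 'X^p.
have -> : (1 - 'X) ^+ w * Pp p L.+1 * (1 - 'X) ^+ ((p - 1) * (w - 1)) =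
          (1 - 'X) ^+ (p * w) * Q.
  by rewrite pp_rec E !exprD -/Q; ring.
rewrite rmorphM /= rmorphXn /= comp1X pp_recr rmorphM /= rmorphXn /= comp1Xn -expnS.
apply: congM; first exact: LA.
apply: cong_sym; rewrite -[X in cong _ _ _ X]mulr1; apply: congM; first exact: cong_refl.
rewrite -[X in cong _ _ _ X](expr1n _ (p - 1)); apply: congX.
exact: cong_1X.
Qed.

Lemma B_fe p w T : prime p -> odd p ->
  cong p%:Z T ((1 - 'X) ^+ (w - 1) * (1 - 'X) ^+ ((p - 1) * (w - 1)))
             ((1 - 'X) ^+ (w - 1) \Po 'X^p).
Proof.
move=> pp op; have p0 : (0 < p)%N by exact: prime_gt0.
rewrite -exprD rmorphXn /= comp1X.
have -> : (w - 1 + (p - 1) * (w - 1) = p * (w - 1))%N.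
  by nia.
rewrite exprM; apply: congX; exact: frob1.
Qed.

Lemma L2 p (f g : {poly int}) c : (0 < p)%N -> (size f <= p)%N ->
  (f * (g \Po 'X^p))`_(c * p) = f`_0 * g`_c.
Proof.
move=> p0 hs; rewrite coefM big_ord_recl /= subn0 coef_comp_poly_Xn //.
rewrite dvdn_mull // mulnK // big1 ?addr0 // => j _.
rewrite /bump /= add1n.
case: (leqP p j.+1) => hj.
  by rewrite nth_default ?mul0r // (leq_trans hs hj).
rewrite coef_comp_poly_Xn // dvdn_subr; last by rewrite dvdn_mull.
  case: ifP => [hd|_]; last by rewrite mulr0.
  by have := dvdn_leq (ltn0Sn _) hd; rewrite leqNgt hj.
exact: ltn_ord j.
Qed.

Lemma size_1subX n : (size ((1 - 'X) ^+ n : {poly int}) <= n.+1)%N.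
Proof.
apply/leq_sizeP => j hj; rewrite coef_1subX bin_small ?mulr0 //.
Qed.

Lemma coef0_1subX n : ((1 - 'X) ^+ n : {poly int})`_0 = 1.
Proof. by rewrite coef_1subX expr0 bin0 mul1r. Qed.

Lemma shift p t (H : {poly int}) L c : (0 < p)%N ->
  ((H \Po 'X^(p ^ t)) * Pp p (L + t))`_(c * p ^ t) = (H * Pp p L)`_c.
Proof.
move=> p0; elim: t c => [|t IH] c.
  by rewrite expn0 comp_polyXr addn0 muln1.
rewrite addnS pp_rec expnSr mulnA -IH.
have -> : 'X^(p ^ t * p) = ('X^(p ^ t) : {poly int}) \Po 'X^p.
  by rewrite comp_Xn_poly -exprM mulnC.
rewrite comp_polyA mulrCA -rmorphM /= L2 //; last first.
  have := size_1subX (p - 1); rewrite subn1 prednK //.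
by rewrite coef0_1subX mul1r.
Qed.

Lemma pp_geo p L T : prime p -> odd p ->
  cong p%:Z T (Pp p L * (1 - 'X)) (1 - 'X^(p ^ L)).
Proof.
move=> pp op; have p0 : (0 < p)%N by exact: prime_gt0.
elim: L => [|L IH].
  by rewrite /Pp big_ord0 mul1r expn0 expr1; exact: cong_refl.
rewrite pp_recr mulrAC.
apply: (@cong_trans _ _ _ ((1 - 'X^(p ^ L)) * (1 - 'X^(p ^ L)) ^+ (p - 1))).
  by apply: congM => //; exact: cong_refl.
rewrite -exprS subn1 prednK //.
have -> : ((1 - 'X^(p ^ L)) ^+ p : {poly int}) = ((1 - 'X) ^+ p) \Po 'X^(p ^ L).
  by rewrite rmorphXn /= comp1X.
rewrite expnSr -(comp1Xn (p ^ L) p); apply: cong_comp; first by rewrite expn_gt0 p0.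
exact: frob1.
Qed.

Lemma pp_one p L j : prime p -> odd p -> (j < p ^ L)%N ->
  (p%:Z %| (Pp p L)`_j - 1)%Z.
Proof.
move=> pp op; have p0 : (0 < p)%N by exact: prime_gt0.
have hc := @pp_geo p L j.+1 pp op.
elim: j hc => [|j IH] hc hj.
  have := hc 0%N (ltn0Sn _).
  by rewrite coefB mulrBr mulr1 coefB coefMX eqxx subr0 coefB coef1 coefXn (ltn_eqF hj) /= subr0.
have h1 := hc j.+1 (ltnSn _).
have h2 := IH (cong_leT (leqnSn _) hc) (ltnW hj).
move: h1; rewrite coefB mulrBr mulr1 coefB coefMX /= coefB coef1 coefXn (ltn_eqF hj) /= subr0.
move=> h1; have := dvdzD h1 h2.
by rewrite addrA subrK.
Qed.

Lemma LA2 p v T : prime p -> odd p ->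
  cong (p%:Z * p%:Z) T ((1 - 'X) ^+ (p * (p * v))) ((1 - 'X^p) ^+ (p * v)).
Proof.
move=> pp op; rewrite mulnA exprM (exprM _ p v) exprM; apply: congX.
by apply: lift_p; apply: frob1.
Qed.

Lemma LB p u t T : prime p -> odd p ->
  cong (p%:Z * p%:Z) T ((1 - 'X) ^+ (p ^ t * (p * u))) (((1 - 'X) ^+ (p * u)) \Po 'X^(p ^ t)).
Proof.
move=> pp op; have p0 : (0 < p)%N by exact: prime_gt0.
elim: t => [|t IH].
  by rewrite expn0 mul1n expr1 comp_polyXr; exact: cong_refl.
have -> : (p ^ t.+1 * (p * u) = p * (p * (p ^ t * u)))%N.
  by rewrite expnS; ring.
apply: cong_trans (@LA2 p (p ^ t * u) T pp op) _.
have -> : ((1 - 'X^p) ^+ (p * (p ^ t * u)) : {poly int}) =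
          ((1 - 'X) ^+ (p ^ t * (p * u))) \Po 'X^p.
  by rewrite rmorphXn /= comp1X mulnCA.
apply: cong_trans (cong_comp p0 IH) _.
rewrite -comp_polyA comp_Xn_poly -exprM -expnS; exact: cong_refl.
Qed.

Lemma pp_cong1 p L : (0 < p)%N -> cong 0 1 (Pp p L) 1.
Proof.
move=> p0; rewrite /Pp; apply: cong_prod1 => i _.
rewrite -[X in cong _ _ _ X](expr1n _ (p - 1)); apply: congX.
by apply: cong_1X; rewrite expn_gt0 p0.
Qed.

Lemma pp0 p L : (0 < p)%N -> (Pp p L)`_0 = 1.
Proof. by move=> p0; rewrite (cong_eq (pp_cong1 L p0)) // coef1. Qed.

Lemma term1 p u t : (0 < p)%N -> (u < p)%N ->
  ((1 - 'X) ^+ u * Pp p t.+1)`_u = (-1) ^+ u * ('C(u + (p - 1), u))%:R.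
Proof.
move=> p0 up; rewrite pp_rec mulrA -exprD -coef_1subX.
apply: (@cong_eq u.+1) => //.
rewrite -[X in cong _ _ _ X]mulr1; apply: congM; first exact: cong_refl.
move=> i hi; rewrite coefB coef_comp_poly_Xn // coef1.
case: i hi => [|i] hi; first by rewrite dvdn0 div0n pp0 // subrr dvdz0.
have hip : (i.+1 < p)%N by exact: leq_trans hi up.
case: ifP => hd.
  by have := dvdn_leq (ltn0Sn _) hd; rewrite leqNgt hip.
by rewrite subrr dvdz0.
Qed.

Lemma term2 p u q L N : prime p -> odd p -> (0 < u)%N -> (0 < q)%N ->
  (p * u * q <= N)%N -> (N < p ^ L)%N ->
  (p%:Z * p%:Z %| ((((1 - 'X) ^+ (p * u) - ((1 - 'X) ^+ u \Po 'X^p)) \Po 'X^q) * Pp p L)`_N)%Z.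
Proof.
move=> pp op u0 q0 hN hL; have p0 : (0 < p)%N by exact: prime_gt0.
set E := (1 - 'X) ^+ (p * u) - ((1 - 'X) ^+ u \Po 'X^p).
set D := E \Po 'X^q.
have hE : forall T, pdiv p%:Z T E.
  move=> T; rewrite /E rmorphXn /= comp1X exprM.
  by apply: congX; apply: frob1.
have hD : forall T, pdiv p%:Z T D by move=> T; apply: pdiv_comp.
have hsE : (size E <= (p * u).+1)%N.
  rewrite /E; apply: leq_trans (size_polyD _ _) _; rewrite geq_max size_polyN.
  apply/andP; split; first exact: size_1subX.
  apply: leq_trans (size_comp_poly_leq _ _) _; rewrite size_polyXn /=.
  have hH := size_1subX u; rewrite ltnS mulnC leq_mul2l; apply/orP; right.
  by move: hH; case: (size _).
have hsD : (size D <= N.+1)%N.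
  apply: leq_trans (size_comp_poly_leq _ _) _; rewrite size_polyXn /= ltnS.
  apply: leq_trans _ hN; apply: leq_mul => //.
  by move: hsE; case: (size _).
have hD1 : D.[1] = 0.
  rewrite /D horner_comp hornerXn expr1n /E hornerD hornerN horner_comp hornerXn expr1n.
  rewrite !horner_exp hornerD hornerN hornerX hornerC subrr !expr0n.
  by rewrite muln_eq0 (gtn_eqF p0) (gtn_eqF u0) subrr.
rewrite coefM.
have -> : \sum_(j < N.+1) D`_j * (Pp p L)`_(N - j) =
          \sum_(j < N.+1) D`_j + \sum_(j < N.+1) D`_j * ((Pp p L)`_(N - j) - 1).
  by rewrite -big_split; apply: eq_bigr => j _ /=; ring.
have -> : \sum_(j < N.+1) D`_j = D.[1].
  by rewrite (horner_coef_wide _ hsD); apply: eq_bigr => j _; rewrite expr1n mulr1.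
rewrite hD1 add0r; apply: dvdz_sum => j _; apply: dvdz_mul; first exact: hD (ltn_ord j).
apply: pp_one => //; exact: leq_ltn_trans (leq_subr _ _) hL.
Qed.

Lemma base p u s L : prime p -> odd p -> (0 < u)%N -> (u < p)%N -> (0 < s)%N ->
  (s < L)%N -> (u * p ^ s < p ^ L)%N ->
  (p%:Z * p%:Z %| ((1 - 'X) ^+ (u * p ^ s) * Pp p L)`_(u * p ^ s)
                   - (-1) ^+ u * ('C(u + (p - 1), u))%:R)%Z.
Proof.
move=> pp op u0 up s0 sL hw; have p0 : (0 < p)%N by exact: prime_gt0.
case: s s0 sL hw => [|s'] // _ sL hw.
set w := (u * p ^ s'.+1)%N.
set q := (p ^ s')%N.
have q0 : (0 < q)%N by rewrite expn_gt0 p0.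
have W : w = (q * (p * u))%N by rewrite /w /q expnS; ring.
set H : {poly int} := (1 - 'X) ^+ u.
set E := (1 - 'X) ^+ (p * u) - (H \Po 'X^p).
have hc : cong (p%:Z * p%:Z) w.+1 ((1 - 'X) ^+ w * Pp p L)
            (((H \Po 'X^(p ^ s'.+1)) + (E \Po 'X^q)) * Pp p L).
  apply: congM; last exact: cong_refl.
  have -> : (H \Po 'X^(p ^ s'.+1)) + (E \Po 'X^q) = ((1 - 'X) ^+ (p * u)) \Po 'X^q.
    rewrite /E rmorphB /= -comp_polyA comp_Xn_poly -exprM -expnSr.
    by rewrite addrC subrK.
  by rewrite W; apply: LB.
have := hc w (ltnSn _).
rewrite coefB => h1.
have hpq : (p * u * q <= w)%N by rewrite W mulnC.
have h2 := @term2 p u q L w pp op u0 q0 hpq hw.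
have h3 : ((H \Po 'X^(p ^ s'.+1)) * Pp p L)`_w = (-1) ^+ u * ('C(u + (p - 1), u))%:R.
  have -> : L = ((L - s'.+1).-1.+1 + s'.+1)%N.
    by rewrite prednK ?subn_gt0 // subnK // ltnW.
  rewrite /w shift //; exact: term1.
move: h1; rewrite mulrDl coefD h3 => h1.
have := dvdzD h1 h2.
set a := ((1 - 'X) ^+ w * Pp p L)`_w.
set b := ((E \Po 'X^q) * Pp p L)`_w.
set c := (-1) ^+ u * ('C(u + (p - 1), u))%:R.
by have -> : a - (c + b) + b = a - c by ring.
Qed.

Lemma logn_fact_small p n : prime p -> (n < p)%N -> logn p n`! = 0%N.
Proof.
move=> pp hn; rewrite logn_fact // big_nat big1 // => k /andP[hk _].
apply: divn_small; apply: leq_trans hn _.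
by have := leq_pexp2l (prime_gt0 pp) hk; rewrite expn1.
Qed.

Lemma logn_fact_one p n : prime p -> (p <= n < p + p)%N -> logn p n`! = 1%N.
Proof.
move=> pp /andP[h1 h2]; have p1 := prime_gt1 pp.
have p0 := prime_gt0 pp.
rewrite logn_fact // big_ltn; last by rewrite ltnS (leq_trans (ltnW p1) h1).
rewrite big_nat big1 ?addn0 => [|k /andP[hk _]].
  rewrite expn1 -(subnKC h1) divnDl ?dvdnn // divnn p0 divn_small //.
  by rewrite ltn_subLR.
apply: divn_small; apply: leq_trans h2 _.
apply: leq_trans (_ : p ^ 2 <= p ^ k)%N; last exact: leq_pexp2l.
rewrite expnS expn1; nia.
Qed.

Lemma logn_binom p u : prime p -> (0 < u)%N -> (u < p)%N ->
  logn p 'C(u + (p - 1), u) = 1%N.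
Proof.
move=> pp u0 up; have p0 := prime_gt0 pp.
have hf := @bin_fact (u + (p - 1)) u (leq_addr _ _).
have hC : (0 < 'C(u + (p - 1), u))%N by rewrite bin_gt0 leq_addr.
have := congr1 (logn p) hf.
rewrite !lognM ?muln_gt0 ?fact_gt0 // addKn.
rewrite (logn_fact_small pp up) (logn_fact_small pp) ?subn1 ?prednK ?ltnSn //.
rewrite logn_fact_one //; first by rewrite !addn0.
apply/andP; split; lia.
Qed.

Lemma nu_eq1 p a : prime p -> (p%:Z %| a)%Z -> ~~ (p%:Z * p%:Z %| a)%Z -> nu p a = 1%N.
Proof.
move=> pp h1 h2; rewrite /nu.
have a0 : (0 < `|a|)%N.
  rewrite absz_gt0; apply/negP => /eqP a0; move: h2; by rewrite a0 dvdz0.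
move: h1 h2; rewrite !dvdzE abszM /= => h1 h2.
have l1 : (1 <= logn p `|a|)%N by rewrite -pfactor_dvdn // expn1.
have l2 : ~~ (2 <= logn p `|a|)%N by rewrite -pfactor_dvdn // expnS expn1.
by apply/eqP; rewrite eqn_leq l1 andbT leqNgt.
Qed.

Lemma nu_eq1_inv p a : prime p -> nu p a = 1%N -> ~~ (p%:Z * p%:Z %| a)%Z.
Proof.
move=> pp; rewrite /nu => h.
have a0 : (0 < `|a|)%N.
  rewrite lt0n; apply/negP => /eqP a0; move: h; by rewrite a0 logn0.
rewrite dvdzE abszM /=; have -> : (p * p = p ^ 2)%N by rewrite expnS expn1.
by rewrite pfactor_dvdn // h.
Qed.


Lemma A0 p k : A p k 0 = 1.
Proof. by rewrite /A big_ord1 /geom_trunc big_ord1 mul0n expr0 expr1n coef1. Qed.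

Lemma phi0 p k T : (1 < p)%N -> (0 < T)%N ->
  (\prod_(i < T) (geom_trunc p i T) ^+ k)`_0 = 1.
Proof. by move=> p1 T0; rewrite phi_A // A0. Qed.

Lemma A_modp p w n : prime p -> odd p ->
  (p%:Z %| A p ((p - 1) * (w - 1)) n - ((1 - 'X) ^+ (w - 1))`_n)%Z.
Proof.
move=> pp op; have p1 := prime_gt1 pp.
set k := ((p - 1) * (w - 1))%N.
set Phi := \prod_(i < n.+1) (geom_trunc p i n.+1) ^+ k.
have := @uniq_fe p p%:Z n.+1 ((1 - 'X) ^+ k) Phi ((1 - 'X) ^+ (w - 1)) p1
  (coef0_1subX k) (cong0 _ (@phi_fe p k n.+1 p1)) (@B_fe p w n.+1 pp op).
rewrite /Phi phi0 // coef0_1subX subrr => /(_ (dvdz0 _) n (ltnSn _)).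
by rewrite coefB phi_A.
Qed.

Lemma A_modp2 p u s : prime p -> odd p -> (0 < u)%N -> (u < p)%N -> (0 < s)%N ->
  (p%:Z * p%:Z %| A p ((p - 1) * (u * p ^ s - 1)) (u * p ^ s)
                  - (-1) ^+ u * ('C(u + (p - 1), u))%:R)%Z.
Proof.
move=> pp op u0 up s0; have p1 := prime_gt1 pp; have p0 := prime_gt0 pp.
set w := (u * p ^ s)%N.
set k := ((p - 1) * (w - 1))%N.
set L := (w + s)%N.
have hwL : (w < p ^ L.+1)%N.
  apply: leq_trans (ltn_expl w p1) _; apply: leq_pexp2l => //.
  rewrite /L; lia.
set Phi := \prod_(i < w.+1) (geom_trunc p i w.+1) ^+ k.
set G := (1 - 'X) ^+ w * Pp p L.+1.
have hG0 : G`_0 = 1 by rewrite /G coef0M coef0_1subX pp0 // mulr1.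
have := @uniq_fe p (p%:Z * p%:Z) w.+1 ((1 - 'X) ^+ k) Phi G p1
  (coef0_1subX k) (cong0 _ (@phi_fe p k w.+1 p1)) (@G_fe p u s L w.+1 pp op s0 u0 hwL).
rewrite /Phi phi0 // hG0 subrr => /(_ (dvdz0 _) w (ltnSn _)).
rewrite coefB phi_A // => h1.
have sL : (s < L.+1)%N by rewrite /L; lia.
have h2 := @base p u s L.+1 pp op u0 up s0 sL hwL.
have := dvdzD h1 h2; rewrite -/w -/G.
by rewrite addrA subrK.
Qed.

Lemma step p u s n : prime p -> odd p -> (0 < u)%N -> (0 < s)%N ->
  (u * p ^ s <= n)%N -> nu p (A p ((p - 1) * (u * p ^ s - 1)) n) = 1%N ->
  exists m, [/\ (n < m)%N, (u * p ^ s <= m)%N & nu p (A p ((p - 1) * (u * p ^ s - 1)) m) = 1%N].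
Proof.
move=> pp op u0 s0; have p1 := prime_gt1 pp; have p0 := prime_gt0 pp.
set w := (u * p ^ s)%N; set k := ((p - 1) * (w - 1))%N => hwn hn.
have w0 : (0 < w)%N by rewrite /w muln_gt0 u0 expn_gt0 p0.
set N := (p * n)%N.
case: (boolP [exists j : 'I_N.+1, [&& (n < j)%N, (w <= j)%N & nu p (A p k j) == 1%N]]).
  move=> /existsP[j /and3P[h1 h2 /eqP h3]]; by exists j.
move=> /existsPn hno; exfalso.
have := @phi_fe p k N.+1 p1 N (ltnSn _).
rewrite dvd0z coefB subr_eq0 => /eqP.
rewrite coef_comp_poly_Xn ?(ltnW p1) // dvdn_mulr // mulKn // phi_A //; last first.
  by rewrite ltnS /N leq_pmull.
rewrite coefM => hE.
have : (p%:Z * p%:Z %| A p k n)%Z.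
  rewrite -hE; apply: dvdz_sum => j _.
  rewrite phi_A // coef_1subX.
  case: (ltnP k (N - j)) => hj; first by rewrite bin_small // !mulr0 dvdz0.
  have hjn : (n < j)%N.
    have hk : (k <= (p - 1) * (n - 1))%N by rewrite /k leq_mul2l; apply/orP; right; lia.
    have n0 : (0 < n)%N by exact: leq_trans w0 hwn.
    have e : ((p - 1) * (n - 1) + p + n = p * n + 1)%N.
      clear -p1 n0; case: p p1 => // p' _; case: n n0 => // n' _.
      rewrite !subn1 /=; ring.
    have := ltn_ord j; move: hj; move: (nat_of_ord j) => jj hj hjT.
    move: hj hjT hk e; rewrite /N.
    move: (p * n)%N ((p - 1) * (n - 1))%N => a b; lia.
  have hjw : (w <= j)%N by apply: leq_trans hwn (ltnW hjn).
  have hnu := hno j; rewrite hjn hjw /= in hnu.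
  have hp : (p%:Z %| A p k j)%Z.
    have := @A_modp p w j pp op; rewrite coef_1subX bin_small ?mulr0 ?subr0 //.
    by rewrite subn1 prednK // ltnS.
  apply: dvdz_mulr; case: (boolP (p%:Z * p%:Z %| A p k j)%Z) => // hpp.
  by move: hnu; rewrite (nu_eq1 pp hp hpp).
by apply/negP; apply: nu_eq1_inv.
Qed.

Theorem theorem3p1 (p u s : nat) :
  prime p -> (3 <= p)%N -> (2 <= u <= p - 1)%N -> (0 < s)%N ->
  forall N : nat, exists n : nat,
    (N <= n)%N /\ nu p (A p ((p - 1) * (u * p ^ s - 1)) n) = 1%N.
Proof.
move=> pp p3 /andP[u2 up1] s0.
have op : odd p.
  by case: (even_prime pp) => // hp; move: p3; rewrite hp.
have p0 := prime_gt0 pp.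
have u0 : (0 < u)%N by exact: leq_trans u2.
have up : (u < p)%N by move: up1; rewrite subn1 -ltnS prednK.
suff H : forall N, exists n, [/\ (N <= n)%N, (u * p ^ s <= n)%N &
                     nu p (A p ((p - 1) * (u * p ^ s - 1)) n) = 1%N].
  by move=> N; have [n [h1 _ h3]] := H N; exists n.
elim=> [|N [n [h1 h2 h3]]].
  exists (u * p ^ s)%N; split => //.
  have h := @A_modp2 p u s pp op u0 up s0.
  have hC := logn_binom pp u0 up.
  have hCpos : (0 < 'C(u + (p - 1), u))%N by rewrite bin_gt0 leq_addr.
  apply: nu_eq1 => //.
    have hc : (p%:Z %| (-1) ^+ u * ('C(u + (p - 1), u))%:R)%Z.
      apply: dvdz_mull; apply: dvdz_natn.
      by rewrite -(expn1 p) pfactor_dvdn // hC.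
    have := dvdzD (dvdz_trans (dvdz_mulr _ (dvdzz p%:Z)) h) hc.
    by rewrite subrK.
  apply/negP => hpp.
  have : (p%:Z * p%:Z %| (-1) ^+ u * ('C(u + (p - 1), u))%:R)%Z.
    by have := dvdzB hpp h; rewrite opprB addrC subrK.
  rewrite dvdzE abszM /= abszM abszX /= exp1n mul1n natz /=.
  have -> : (p * p = p ^ 2)%N by rewrite expnS expn1.
  by rewrite pfactor_dvdn // hC.
have [m [hm1 hm2 hm3]] := @step p u s n pp op u0 s0 h2 h3.
by exists m; split => //; apply: leq_ltn_trans h1 hm1.
Qed.
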